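(* Let $\mathcal{I}$ and $\mathcal{F}$ be the sets of initial and final states of the NFA $\mathcal{A}$, and $M=\mathcal{I}\times\mathcal{F}$. For $\mu=(I,F)\in M$ with $F=((d_1,d_2),e_1,e_2,\kappa)$, let $R_\mu$ be the set of words labelling a path in $\mathcal{A}$ from $I$ to $F$, and let $B_\mu=B(d_1,d_2,e_1,e_2)$. Then $\mathcal{H}_\kappa(L_1,L_2)=\bigcup_{\mu\in M}B_\mu^{R_\mu}$, and the sets $B_\mu^{R_\mu}$, $\mu\in M$, are pairwise disjoint. Moreover, for every $\mu\in M$, every $\beta\in B_\mu$ and every $v\in R_\mu$, the minimal gamma-alpha-prefix of $v\beta\bar v$ is $v$.
   Context: $\Sigma$ is a finite alphabet with at least two letters with an involution $a\mapsto\bar a$ ($\bar{\bar a}=a$), extended to words by $\overline{a_1\cdots a_m}=\bar a_m\cdots\bar a_1$ and to languages elementwise. $\kappa$ is a fixed positive integer. $\mathcal{H}_\kappa(L_1,L_2)=\{\gamma\alpha\beta\bar\alpha\bar\gamma:|\alpha|\ge\kappa,\ \gamma\alpha\beta\bar\alpha\in L_1\text{ or }\alpha\beta\bar\alpha\bar\gamma\in L_2\}$. $L_1,L_2\subseteq\Sigma^*$ are regular; $\mathcal{A}_1=(Q_1,\Sigma,E_1,\{q_{01}\},F_1)$ is a complete DFA accepting $L_1$, $\mathcal{A}_2=(Q_2,\Sigma,E_2,\{q_{02}\},F_2)$ a complete DFA accepting $\overline{L_2}$; $p\cdot w$ is the state reached from $p$ on $w$. For $\pi\in\mathcal{H}_\kappa(L_1,L_2)$,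 consider all factorizations $\pi=\gamma\alpha\beta\bar\alpha\bar\gamma$ with $|\alpha|=\kappa$ and ($\gamma\alpha\beta\bar\alpha\in L_1$ or $\alpha\beta\bar\alpha\bar\gamma\in L_2$); the minimal gamma-alpha-prefix of $\pi$ is the word $\gamma\alpha$ for such a factorization with $|\gamma|$ minimal. For languages $B,R$, $B^R=\{v\beta\bar v:\beta\in B,v\in R\}$. Construction of $\mathcal{A}$: $Q_{12}=\{(q_{01}\cdot w,q_{02}\cdot w):w\in\Sigma^*\}$ with $(p_1,p_2)\cdot w=(p_1\cdot w,p_2\cdot w)$. For $(p_1,p_2,q_1,q_2)\in Q_1\times Q_2\times Q_1\times Q_2$ let $B(p_1,p_2,q_1,q_2)=\{w\in\Sigma^*:p_1\cdot w=q_1,\ p_2\cdot\bar w=q_2\}$; the quadruple is a basic bridge if this set is nonempty. The states of $\mathcal{A}$ (called bridges) are all $((p_1,p_2),q_1,q_2,\ell)$ with $(p_1,p_2)\in Q_{12}$, $q_i\in Q_i$, $\ell\in\{0,\dots,\kappa\}$ such that $(p_1,p_2,q_1,q_2)$ is a basic bridge. For $a\in\Sigma$, $P\in Q_{12}$, $q_1\in Q_1,q_2\in Q_2$, there is an $a$-labelled arc from $(P,q_1\cdot\bar a,q_2\cdot\bar a,\ell)$ to $(P\cdot a,q_1,q_2,\ell')$, provided both are states, exactly in the cases: $\ell=\ell'=0$ and $q_1\cdot\bar a\notin F_1$, $q_2\cdot\bar a\notin F_2$; or $\ell=0,\ell'=1$ and ($q_1\cdot\bar a\in F_1$ or $q_2\cdot\bar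 a\in F_2$); or $1\le\ell<\kappa$ and $\ell'=\ell+1$. Initial states are those of the form $((q_{01},q_{02}),q_1',q_2',0)$; final states are those with $\ell=\kappa$. *)

(* Defs.v *)
From mathcomp Require Import all_boot.
Set Implicit Arguments. Unset Strict Implicit. Unset Printing Implicit Defensive.

Section Words.
Variable S : finType.
Variable bar : S -> S.

Definition wbar (w : seq S) : seq S := rev (map bar w).

Definition run (Q : Type) (d : Q -> S -> Q) (p : Q) (w : seq S) : Q := foldl d p w.

Variable kappa : nat.

Definition Hk (L1 L2 : seq S -> Prop) (pi : seq S) : Prop :=
  exists g a b, pi = g ++ a ++ b ++ wbar a ++ wbar g /\ kappa <= size a /\
    (L1 (g ++ a ++ b ++ wbar a) \/ L2 (a ++ b ++ wbar a ++ wbar g)).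

Definition valid_fact (L1 L2 : seq S -> Prop) (pi g a b : seq S) : Prop :=
  pi = g ++ a ++ b ++ wbar a ++ wbar g /\ size a = kappa /\
    (L1 (g ++ a ++ b ++ wbar a) \/ L2 (a ++ b ++ wbar a ++ wbar g)).

Definition min_ga_prefix (L1 L2 : seq S -> Prop) (pi p : seq S) : Prop :=
  exists g a b, valid_fact L1 L2 pi g a b /\ p = g ++ a /\
    (forall g' a' b', valid_fact L1 L2 pi g' a' b' -> size g <= size g').

Definition hcomp (B R : seq S -> Prop) (pi : seq S) : Prop :=
  exists beta v, B beta /\ R v /\ pi = v ++ beta ++ wbar v.

Section Automaton.
Variables (Q1 Q2 : finType).
Variables (d1 : Q1 -> S -> Q1) (q01 : Q1) (F1 : {set Q1}).
Variables (d2 : Q2 -> S -> Q2) (q02 : Q2) (F2 : {set Q2}).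

Definition Q12 (P : Q1 * Q2) : Prop :=
  exists w, P = (run d1 q01 w, run d2 q02 w).

Definition Bset (p1 : Q1) (p2 : Q2) (q1 : Q1) (q2 : Q2) (w : seq S) : Prop :=
  run d1 p1 w = q1 /\ run d2 p2 (wbar w) = q2.

Definition basic_bridge p1 p2 q1 q2 : Prop := exists w, Bset p1 p2 q1 q2 w.

Definition bstate := ((Q1 * Q2) * Q1 * Q2 * nat)%type.

Definition is_bridge (s : bstate) : Prop :=
  let: (P, q1, q2, l) := s in
  Q12 P /\ basic_bridge P.1 P.2 q1 q2 /\ l <= kappa.

Definition step12 (P : Q1 * Q2) (a : S) : Q1 * Q2 := (d1 P.1 a, d2 P.2 a).

Definition arc (s : bstate) (a : S) (t : bstate) : Prop :=
  exists (P : Q1 * Q2) (q1 : Q1) (q2 : Q2) (l l' : nat),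
    s = (P, d1 q1 (bar a), d2 q2 (bar a), l) /\
    t = (step12 P a, q1, q2, l') /\
    is_bridge s /\ is_bridge t /\
    [\/ [/\ l = 0, l' = 0, d1 q1 (bar a) \notin F1 & d2 q2 (bar a) \notin F2],
        [/\ l = 0, l' = 1 & (d1 q1 (bar a) \in F1 \/ d2 q2 (bar a) \in F2)]
      | [/\ 1 <= l, l < kappa & l' = l.+1]].

Definition is_init (s : bstate) : Prop :=
  is_bridge s /\ exists q1 q2, s = ((q01, q02), q1, q2, 0).

Definition is_final (s : bstate) : Prop := is_bridge s /\ s.2 = kappa.

Fixpoint labels_path (s : bstate) (w : seq S) (t : bstate) : Prop :=
  match w with
  | [::] => s = t
  | a :: w' => exists u, arc s a u /\ labels_path u w' t
  end.

Definition inM (mu : bstate * bstate) : Prop := is_init mu.1 /\ is_final mu.2.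

Definition R_mu (mu : bstate * bstate) (w : seq S) : Prop := labels_path mu.1 w mu.2.

Definition B_mu (mu : bstate * bstate) : seq S -> Prop :=
  let: ((e1', e2'), f1, f2, _) := mu.2 in Bset e1' e2' f1 f2.

End Automaton.
End Words.

(* Main.v *)
Require Import Defs.
From mathcomp Require Import all_boot zify.
From Stdlib Require Import Classical.
Set Implicit Arguments. Unset Strict Implicit. Unset Printing Implicit Defensive.

Section Proof.
Variables (S : finType) (bar : S -> S) (kappa : nat).
Variables (Q1 Q2 : finType).
Variables (d1 : Q1 -> S -> Q1) (q01 : Q1) (F1 : {set Q1}).
Variables (d2 : Q2 -> S -> Q2) (q02 : Q2) (F2 : {set Q2}).
Variables (L1 L2 : seq S -> Prop).
Hypothesis Hbar : involutive bar.
Hypothesis Hk0 : 0 < kappa.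
Hypothesis HL1 : forall w, L1 w <-> run d1 q01 w \in F1.
Hypothesis HL2 : forall w, (exists u, L2 u /\ w = wbar bar u) <-> run d2 q02 w \in F2.

Local Notation wb := (wbar bar).
Local Notation lp := (labels_path bar kappa d1 q01 F1 d2 q02 F2).
Local Notation arcA := (Defs.arc bar kappa d1 q01 F1 d2 q02 F2).
Local Notation isb := (is_bridge bar kappa d1 q01 d2 q02).

Lemma wbar_cat x y : wb (x ++ y) = wb y ++ wb x.
Proof. by rewrite /wbar map_cat rev_cat. Qed.
Lemma wbarK x : wb (wb x) = x.
Proof. rewrite /wbar map_rev revK -map_comp map_id_in // => a _ /=. by rewrite Hbar. Qed.
Lemma size_wbar x : size (wb x) = size x.
Proof. by rewrite /wbar size_rev size_map. Qed.
Lemma wbar_cons a x : wb (a :: x) = rcons (wb x) (bar a).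
Proof. by rewrite /wbar /= rev_cons. Qed.
Lemma wbar_nil : wb [::] = [::].
Proof. by []. Qed.
Lemma run_cat (Q : Type) (d : Q -> S -> Q) p x y : run d p (x ++ y) = run d (run d p x) y.
Proof. by rewrite /run foldl_cat. Qed.
Lemma run_rcons (Q : Type) (d : Q -> S -> Q) p x a : run d p (rcons x a) = d (run d p x) a.
Proof. by rewrite /run foldl_rcons. Qed.

Lemma foldl_step P w : foldl (step12 d1 d2) P w = (run d1 P.1 w, run d2 P.2 w).
Proof. elim: w P => [|a w IH] [p1 p2] //. exact: IH. Qed.

Lemma lp_cat s x y t : lp s (x ++ y) t <-> exists u, lp s x u /\ lp u y t.
Proof.
elim: x s => [|a x IH] s /=.
  by split; [exists s | case=> u [-> ]].
split.
  case=> u [Hu /IH [u' [H1 H2]]]. by exists u'; split => //; exists u.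
case=> u' [[u [Hu H1]] H2]. exists u; split => //. by apply/IH; exists u'.
Qed.

Lemma pathA s w t : lp s w t ->
  t.1.1.1 = foldl (step12 d1 d2) s.1.1.1 w /\
  s.1.1.2 = run d1 t.1.1.2 (wb w) /\ s.1.2 = run d2 t.1.2 (wb w).
Proof.
elim: w s => [|a w IH] s /=; first by move=> ->.
case=> u [[P [q1 [q2 [l [l' [-> [-> _]]]]]]] Hp].
have /= [-> [-> ->]] := IH _ Hp.
by rewrite wbar_cons !run_rcons.
Qed.

Lemma lev1 s w t : lp s w t -> 1 <= s.2 -> t.2 = s.2 + size w.
Proof.
elim: w s => [|a w IH] s /=; first by move=> -> _; rewrite addn0.
case=> u [[P [q1 [q2 [l [l' [-> [-> [_ [_ H]]]]]]]]] Hp] /= Hl.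
case: H => [[Hl0]|[Hl0]|[_ _ El']]; try by rewrite Hl0 in Hl.
rewrite El' in Hp. rewrite (IH _ Hp) //= ?addnS ?addSn //.
Qed.

Definition E (t : bstate Q1 Q2) w k :=
  run d1 t.1.1.2 (wb (drop k w)) \in F1 \/ run d2 t.1.2 (wb (drop k w)) \in F2.

Lemma lev0 s w t : lp s w t -> s.2 = 0 -> t.2 = kappa ->
  kappa <= size w /\ (forall k, k < size w - kappa -> ~ E t w k) /\ E t w (size w - kappa).
Proof.
elim: w s => [|a w IH] s /=.
  by move=> -> ->; move: Hk0 => /[swap] <-.
move=> [u [Harc Hp]] Hs Ht.
have [Hu1 [Hu2 Hu3]] := pathA Hp.
case: Harc => [P [q1 [q2 [l [l' [Es [Eu [_ [_ H]]]]]]]]].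
rewrite Es /= in Hs; rewrite Eu /= in Hu2 Hu3 Hp.
case: H => [[_ Hl' N1 N2]|[_ Hl' HF]|[Hl _ _]]; last by rewrite Hs in Hl.
- have [IH1 [IH2 IH3]] := IH _ Hp Hl' Ht.
  split; first exact: leqW.
  have Hsz : (size w).+1 - kappa = (size w - kappa).+1 by rewrite subSn.
  rewrite Hsz; split; last by [].
  case=> [|k] Hk; last exact: IH2.
  rewrite /E /= wbar_cons !run_rcons -Hu2 -Hu3 => -[]; by [move/negP: N1|move/negP: N2].
- have := lev1 Hp; rewrite Hl' Ht => /(_ isT) /= Hsz.
  rewrite Hsz add1n subnn; split => //; split => // .
  by rewrite /E /= wbar_cons !run_rcons -Hu2 -Hu3.
Qed.

Definition C v beta k := L1 (v ++ beta ++ wb (drop k v)) \/ L2 (drop k v ++ beta ++ wb v).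

Lemma ECx v beta k :
  (run d1 (run d1 q01 (v ++ beta)) (wb (drop k v)) \in F1 \/
   run d2 (run d2 (run d2 q02 v) (wb beta)) (wb (drop k v)) \in F2) <-> C v beta k.
Proof.
rewrite /C -!run_cat -catA -HL1 -HL2.
have -> : v ++ wb beta ++ wb (drop k v) = wb (drop k v ++ beta ++ wb v).
  by rewrite !wbar_cat !wbarK catA.
split; case=> H; [by left|right|by left|right].
- case: H => u [Hu /(congr1 wb)]; rewrite !wbarK => ->. exact: Hu.
- by exists (drop k v ++ beta ++ wb v).
Qed.

Lemma cat_inj_r (x y x' y' : seq S) : x ++ y = x' ++ y' -> size y = size y' -> x = x'.
Proof.
move=> H Hs.
have Hx : size x = size x' by move/(congr1 size): H; rewrite !size_cat Hs; apply: addIn.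
by move/(congr1 (take (size x))): H; rewrite take_size_cat // Hx take_size_cat.
Qed.

Lemma cat_inj_l (x y x' y' : seq S) : x ++ y = x' ++ y' -> size x = size x' -> y = y'.
Proof. by move=> H Hs; move/(congr1 (drop (size x))): H; rewrite drop_size_cat // Hs drop_size_cat. Qed.

Local Notation VF := (valid_fact bar kappa L1 L2).

Lemma mkvf' g A D beta : size A = kappa -> C (g ++ A ++ D) beta (size g) ->
  VF ((g ++ A ++ D) ++ beta ++ wb (g ++ A ++ D)) g A (D ++ beta ++ wb D).
Proof.
rewrite /C drop_size_cat // => HA HC; split; [|split => //].
  by rewrite !wbar_cat -!catA.
by move: HC; rewrite !wbar_cat -!catA.
Qed.

Lemma mkvf v beta k : k + kappa <= size v -> C v beta k ->
  VF (v ++ beta ++ wb v) (take k v) (take kappa (drop k v))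
     (drop kappa (drop k v) ++ beta ++ wb (drop kappa (drop k v))).
Proof.
move=> Hk HC.
have Ev : v = take k v ++ take kappa (drop k v) ++ drop kappa (drop k v) by rewrite !cat_take_drop.
have Hsk : size (take k v) = k by rewrite size_takel //; lia.
rewrite {1 2}Ev; apply: mkvf'.
  by rewrite size_takel // size_drop; lia.
by rewrite -Ev Hsk.
Qed.

Lemma vfC pi v beta g a b : VF pi g a b -> pi = v ++ beta ++ wb v -> size g <= size v ->
  C v beta (size g).
Proof.
move=> [Hpi [Ha HL]] Epi Hg.
have Ev : v = take (size g) v ++ drop (size g) v by rewrite cat_take_drop.
have Hsk : size (take (size g) v) = size g by rewrite size_takel.
rewrite /C.
have -> : v ++ beta ++ wb (drop (size g) v) = g ++ a ++ b ++ wb a.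
  apply: (@cat_inj_r _ (wb (take (size g) v)) _ (wb g)); last by rewrite !size_wbar.
  by rewrite -!catA -wbar_cat -Ev -Epi Hpi ?catA.
have -> : drop (size g) v ++ beta ++ wb v = a ++ b ++ wb a ++ wb g.
  apply: (@cat_inj_l (take (size g) v) _ g); last by [].
  by rewrite catA -Ev -Epi Hpi.
exact: HL.
Qed.

Definition mu_of v beta : bstate Q1 Q2 * bstate Q1 Q2 :=
  (((q01, q02), run d1 (run d1 q01 (v ++ beta)) (wb v),
     run d2 (run d2 (run d2 q02 v) (wb beta)) (wb v), 0),
   ((run d1 q01 v, run d2 q02 v), run d1 q01 (v ++ beta), run d2 (run d2 q02 v) (wb beta), kappa)).

Local Notation inMA := (inM bar kappa d1 q01 d2 q02).
Local Notation BA := (B_mu bar d1 d2).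
Local Notation RA := (R_mu bar kappa d1 q01 F1 d2 q02 F2).

Lemma inM_struct mu beta v : inMA mu -> BA mu beta -> RA mu v -> mu = mu_of v beta.
Proof.
move: mu => [[[[P0 q10] q20] l0] [[[[pf1 pf2] q1f] q2f] lf]].
move=> [[_ [x1 [x2 Ei]]] [_ /= Hlf]]; case: Ei => -> -> -> ->.
rewrite /B_mu /Bset /= => -[Hb1 Hb2] Hr.
have /= [Hf [-> ->]] := pathA Hr.
rewrite foldl_step /= in Hf; case: Hf => E1 E2.
by rewrite /mu_of -Hb1 -Hb2 Hlf E1 E2 run_cat.
Qed.

Local Notation MGP := (min_ga_prefix bar kappa L1 L2).

Lemma part3 mu beta v : inMA mu -> BA mu beta -> RA mu v -> MGP (v ++ beta ++ wb v) v.
Proof.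
move=> HM HB HR.
have Emu := inM_struct HM HB HR.
rewrite Emu /R_mu /= in HR.
have [Hsz [Hlt Heq]] := lev0 HR erefl erefl.
set t := size v - kappa.
have HC : forall k, E (mu_of v beta).2 v k <-> C v beta k by move=> k; exact: ECx.
exists (take t v), (drop t v), beta.
split; last split.
- split. rewrite -[in LHS](cat_take_drop t v) wbar_cat -!catA. by [].
  split; first by rewrite size_drop; lia.
  rewrite [take t v ++ _]catA cat_take_drop -wbar_cat cat_take_drop.
  exact: (proj1 (HC t) Heq).
- by rewrite cat_take_drop.
- move=> g' a' b' Hv; rewrite leqNgt; apply/negP => Hlt'.
  rewrite size_takel /t in Hlt'; last by lia.
  apply: (Hlt (size g')); first by lia.
  apply: (proj2 (HC _)).
  apply: (vfC Hv erefl); lia.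
Qed.

Lemma construct v beta t : size v = t + kappa -> (forall k, k < t -> ~ C v beta k) ->
  C v beta t -> exists mu, inMA mu /\ BA mu beta /\ RA mu v.
Proof.
move=> Hsz Hlt Ht.
have [x0 _] : exists x0 : S, True.
  by case: v Hsz {Hlt Ht} => [|a v'] /= Hsz; [lia | exists a].
set e1 := run d1 q01 (v ++ beta).
set e2 := run d2 (run d2 q02 v) (wb beta).
pose u k : bstate Q1 Q2 := ((run d1 q01 (take k v), run d2 q02 (take k v)),
   run d1 e1 (wb (drop k v)), run d2 e2 (wb (drop k v)), k - t).
have Hb : forall k, k <= size v -> isb (u k).
  move=> k Hk; split; first by exists (take k v).
  split; last by rewrite /=; lia.
  exists (drop k v ++ beta ++ wb (drop k v)); split => /=.
    by rewrite /e1 -!run_cat !catA cat_take_drop.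
  by rewrite /e2 !wbar_cat wbarK -!run_cat !catA cat_take_drop.
have Harc : forall k, k < size v -> arcA (u k) (nth x0 v k) (u k.+1).
  move=> k Hk.
  exists (run d1 q01 (take k v), run d2 q02 (take k v)),
    (run d1 e1 (wb (drop k.+1 v))), (run d2 e2 (wb (drop k.+1 v))), (k - t), (k.+1 - t).
  split.
    by rewrite /u (drop_nth x0 Hk) wbar_cons !run_rcons.
  split.
    by rewrite /u (take_nth x0 Hk) !run_rcons.
  split; first by apply: Hb; lia.
  split; first by apply: Hb; lia.
  have HE : (run d1 e1 (wb (drop k v)) \in F1 \/ run d2 e2 (wb (drop k v)) \in F2) <-> C v beta k
    by exact: ECx.
  rewrite (drop_nth x0 Hk) wbar_cons !run_rcons in HE.
  case: (ltngtP k t) => Hkt.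
  - constructor 1; split; try lia.
      by apply/negP => H; apply: (Hlt k Hkt); apply/HE; left.
    by apply/negP => H; apply: (Hlt k Hkt); apply/HE; right.
  - constructor 3; split; lia.
  - constructor 2; split; try lia.
    by apply/HE; rewrite Hkt.
have Hpath : forall n k, size v - k = n -> k <= size v -> lp (u k) (drop k v) (u (size v)).
  elim=> [|n IH] k Hn Hk.
    have -> : k = size v by lia.
    by rewrite drop_size.
  have Hk' : k < size v by lia.
  rewrite (drop_nth x0 Hk') /=.
  exists (u k.+1); split; first exact: Harc.
  apply: IH; lia.
exists (u 0, u (size v)); split; last split.
- split.
    split; first by apply: Hb.
    by exists (run d1 e1 (wb (drop 0 v))), (run d2 e2 (wb (drop 0 v))); rewrite /u take0 sub0n.
  split; first by apply: Hb.
  by rewrite /=; lia.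
- rewrite /B_mu /Bset /= take_size drop_size /=.
  by rewrite /e1 /e2 run_cat.
- rewrite /R_mu /=.
  have := Hpath (size v - 0) 0 erefl (leq0n _).
  by rewrite drop0.
Qed.

Lemma exmin (P : nat -> Prop) : (exists n, P n) -> exists n, P n /\ forall m, P m -> n <= m.
Proof.
move=> [n Hn].
suff : forall N n, n <= N -> P n -> exists n, P n /\ forall m, P m -> n <= m.
  by move=> /(_ n n (leqnn n) Hn).
elim=> [|N IH] n0 Hle Pn.
  by exists n0; split => // m _; lia.
case: (classic (exists m, m < n0 /\ P m)) => [[m [Hm Pm]]|H].
  apply: (IH m) => //; lia.
exists n0; split => // m Pm; rewrite leqNgt; apply/negP => Hmn.
by apply: H; exists m.
Qed.

Lemma min_uniq pi p p' : MGP pi p -> MGP pi p' -> p = p'.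
Proof.
move=> [g [a [b [Hv [-> Hmin]]]]] [g' [a' [b' [Hv' [-> Hmin']]]]].
have H1 := Hmin _ _ _ Hv'. have H2 := Hmin' _ _ _ Hv.
case: Hv => [Hpi [Ha _]]; case: Hv' => [Hpi' [Ha' _]].
have Hs : size (g ++ a) = size (g' ++ a') by rewrite !size_cat Ha Ha'; lia.
have T1 : take (size (g ++ a)) pi = g ++ a by rewrite Hpi catA take_size_cat.
have T2 : take (size (g' ++ a')) pi = g' ++ a' by rewrite Hpi' catA take_size_cat.
by rewrite -T1 -T2 Hs.
Qed.

Local Notation HkA := (Hk bar kappa L1 L2).
Local Notation hc mu := (hcomp bar (BA mu) (RA mu)).

Lemma part1 pi : HkA pi <-> exists mu, inMA mu /\ hc mu pi.
Proof.
split.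
- move=> [g [a [b [Hpi [Ha HL]]]]].
  have Hpi2 : pi = (g ++ a) ++ b ++ wb (g ++ a) by rewrite Hpi wbar_cat -!catA.
  have Hex : exists n, exists g a b, VF pi g a b /\ size g = n.
    have HC : C (g ++ a) b (size g).
      by rewrite /C drop_size_cat // wbar_cat -!catA.
    have := mkvf (v := g ++ a) (k := size g) _ HC.
    rewrite -Hpi2 => H; eexists; do 3 eexists; split; first apply: H; first by rewrite size_cat; lia.
    done.
  have [n [[g0 [a0 [b0 [Hv0 Hn]]]] Hmin]] := exmin Hex.
  have Hv := Hv0; case: Hv0 => [Hpi0 [Ha0 HL0]].
  have Hpi3 : pi = (g0 ++ a0) ++ b0 ++ wb (g0 ++ a0) by rewrite Hpi0 wbar_cat -!catA.
  have [mu [HM [HB HR]]] : exists mu, inMA mu /\ BA mu b0 /\ RA mu (g0 ++ a0).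
    apply: (construct (t := size g0)).
    + by rewrite size_cat Ha0.
    + move=> k Hk HCk.
      have := mkvf (v := g0 ++ a0) (k := k) _ HCk.
      rewrite -Hpi3 => /(_ ltac:(rewrite size_cat; lia)) Hv'.
      have Hk' : size (take k (g0 ++ a0)) = k by rewrite size_takel // size_cat; lia.
      have := Hmin (size (take k (g0 ++ a0))) (ex_intro _ _ (ex_intro _ _ (ex_intro _ _ (conj Hv' erefl)))).
      rewrite Hk'; lia.
    + apply: (vfC Hv Hpi3). rewrite size_cat; lia.
  by exists mu; split => //; exists b0, (g0 ++ a0).
- move=> [mu [HM [beta [v [HB [HR ->]]]]]].
  have [g [a [b [[Hpi [Ha HL]] _]]]] := part3 HM HB HR.
  by exists g, a, b; split => //; split => //; rewrite Ha.
Qed.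

Lemma part2 mu mu' pi : inMA mu -> inMA mu' -> mu <> mu' ->
  ~ (hc mu pi /\ hc mu' pi).
Proof.
move=> HM HM' Hne [[beta [v [HB [HR Epi]]]] [beta' [v' [HB' [HR' Epi']]]]].
have P1 := part3 HM HB HR. have P2 := part3 HM' HB' HR'.
rewrite -Epi in P1; rewrite -Epi' in P2.
have Ev := min_uniq P1 P2. subst v'.
have Eb : beta = beta'.
  have H := cat_inj_l (etrans (esym Epi) Epi') erefl.
  exact: (cat_inj_r H erefl).
subst beta'.
apply: Hne. by rewrite (inM_struct HM HB HR) (inM_struct HM' HB' HR').
Qed.
End Proof.

Theorem lemma1 (S : finType) (bar : S -> S) (kappa : nat)
  (Q1 Q2 : finType)
  (d1 : Q1 -> S -> Q1) (q01 : Q1) (F1 : {set Q1})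
  (d2 : Q2 -> S -> Q2) (q02 : Q2) (F2 : {set Q2})
  (L1 L2 : seq S -> Prop) :
  1 < #|S| ->
  involutive bar ->
  0 < kappa ->
  (forall w, L1 w <-> run d1 q01 w \in F1) ->
  (forall w, (exists u, L2 u /\ w = wbar bar u) <-> run d2 q02 w \in F2) ->
  [/\ (forall pi, Hk bar kappa L1 L2 pi <->
         exists mu, inM bar kappa d1 q01 d2 q02 mu /\
           hcomp bar (B_mu bar d1 d2 mu) (R_mu bar kappa d1 q01 F1 d2 q02 F2 mu) pi),
      (forall mu mu', inM bar kappa d1 q01 d2 q02 mu ->
         inM bar kappa d1 q01 d2 q02 mu' -> mu <> mu' ->
         forall pi, ~ (hcomp bar (B_mu bar d1 d2 mu) (R_mu bar kappa d1 q01 F1 d2 q02 F2 mu) pi /\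
                       hcomp bar (B_mu bar d1 d2 mu') (R_mu bar kappa d1 q01 F1 d2 q02 F2 mu') pi))
    & (forall mu beta v, inM bar kappa d1 q01 d2 q02 mu ->
         B_mu bar d1 d2 mu beta -> R_mu bar kappa d1 q01 F1 d2 q02 F2 mu v ->
         min_ga_prefix bar kappa L1 L2 (v ++ beta ++ wbar bar v) v)].
Proof.
move=> _ Hbar Hk0 HL1 HL2; split.
- exact: (part1 Hbar Hk0 HL1 HL2).
- move=> mu mu' HM HM' Hne pi; exact: (part2 Hbar Hk0 HL1 HL2 HM HM' Hne).
- move=> mu beta v HM HB HR; exact: (part3 Hbar Hk0 HL1 HL2 HM HB HR).
Qed.
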